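(* Let $A,M\in\mathbb{C}^{n\times n}$ be Hermitian with $M$ positive definite, and let the eigenvalues of the pair $(A,M)$ be $\lambda_1<\lambda_2\le\cdots\le\lambda_n$. Put $A_{\lambda_1}=A-\lambda_1 M$. Let $T\in\mathbb{C}^{n\times n}$ be Hermitian positive definite. Let $x^{(0)}\in\mathbb{C}^n$ be neither an eigenvector of $(A,M)$ associated with $\lambda_1$ nor $M$-orthogonal to the eigenspace associated with $\lambda_1$, and let $x^{(0)},x^{(1)},\ldots$ be the iterates of the following heuristic preconditioned CG iteration (for as long as it is defined): set $r^{(0)}=-A_{\lambda_1}x^{(0)}$, $\gamma^{(0)}=(Tr^{(0)})^*r^{(0)}$, $p^{(0)}=Tr^{(0)}$, and for $i=0,1,\ldots$: $w=A_{\lambda_1}p^{(i)}$, $\delta=\gamma^{(i)}/(w^*p^{(i)})$, $x^{(i+1)}=x^{(i)}+\delta p^{(i)}$, $r^{(i+1)}=r^{(i)}-\delta w$, $\gamma^{(i+1)}=(Tr^{(i+1)})^*r^{(i+1)}$, $p^{(i+1)}=Tr^{(i+1)}+(\gamma^{(i+1)}/\gamma^{(i)})p^{(i)}$. Define $B=T^{1/2}A_{\lambda_1}T^{1/2}$ and let $V$ be an arbitrary matrix whose columns form an orthonormal basis of the image $\operatorname{im}(B)$. Then the vectors $\tilde{x}^{(i)}=V^*T^{-1/2}x^{(i)}$, $i=0,1,\ldots$, are the iterates of the standard (non-preconditioned) conjugate gradient method applied to the linear system $\tilde{B}\tilde{x}=0$ with $\tilde{B}=V^*BV$ and initial guess 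$\tilde{x}^{(0)}$.
   Context: $T^{1/2}$ denotes the Hermitian positive definite square root of $T$. The asterisk denotes the conjugate transpose. *)

(* Defs.v *)
From HB Require Import structures.
From mathcomp Require Import all_boot all_order all_algebra.
From mathcomp Require Import reals.
From mathcomp Require Import complex.
Set Implicit Arguments. Unset Strict Implicit. Unset Printing Implicit Defensive.
Import Order.TTheory GRing.Theory Num.Theory.
Local Open Scope ring_scope.

Section Defs.
Variable R : realType.
Local Notation C := R[i].

Definition ctmx (m n : nat) (A : 'M[C]_(m, n)) : 'M[C]_(n, m) :=
  (map_mx (fun z : C => z^*) A)^T.

Definition cdot (n : nat) (u v : 'cV[C]_n) : C := (ctmx u *m v) 0 0.

Definition herm_mx (n : nat) (A : 'M[C]_n) : Prop := ctmx A = A.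

Definition hpd (n : nat) (A : 'M[C]_n) : Prop :=
  herm_mx A /\ forall x : 'cV[C]_n, x != 0 -> 0 < cdot x (A *m x).

(* characteristic polynomial det(A - t M) of the pencil (A, M); its roots,
   counted with multiplicity, are the eigenvalues of the pair (A, M) *)
Definition pencil_poly (n : nat) (A M : 'M[C]_n) : {poly C} :=
  \det (map_mx polyC A - 'X *: map_mx polyC M).

Definition cgstate (n : nat) := ('cV[C]_n * 'cV[C]_n * 'cV[C]_n * C)%type.

Definition pcg_step (n : nat) (K T : 'M[C]_n) (s : cgstate n) : cgstate n :=
  let: (x, r, p, g) := s in
  let w := K *m p in
  let d := g / cdot w p in
  let x' := x + d *: p in
  let r' := r - d *: w in
  let g' := cdot (T *m r') r' in
  let p' := T *m r' + (g' / g) *: p in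
  (x', r', p', g').

Definition pcg_init (n : nat) (K T : 'M[C]_n) (x0 : 'cV[C]_n) : cgstate n :=
  let r0 := - (K *m x0) in (x0, r0, T *m r0, cdot (T *m r0) r0).

Definition pcg (n : nat) (K T : 'M[C]_n) (x0 : 'cV[C]_n) (i : nat) : cgstate n :=
  iter i (pcg_step K T) (pcg_init K T x0).

Definition pcg_x n (K T : 'M[C]_n) x0 i : 'cV[C]_n := (pcg K T x0 i).1.1.1.
Definition pcg_p n (K T : 'M[C]_n) x0 i : 'cV[C]_n := (pcg K T x0 i).1.2.
Definition pcg_g n (K T : 'M[C]_n) x0 i : C := (pcg K T x0 i).2.

(* the iterates x^(0..k) are defined: all denominators used are nonzero *)
Definition pcg_defined n (K T : 'M[C]_n) x0 (k : nat) : Prop :=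
  forall i, (i < k)%N ->
    cdot (K *m pcg_p K T x0 i) (pcg_p K T x0 i) != 0 /\
    ((i.+1 < k)%N -> pcg_g K T x0 i != 0).

Definition cg_step (n : nat) (K : 'M[C]_n) (s : cgstate n) : cgstate n :=
  let: (x, r, p, g) := s in
  let w := K *m p in
  let a := g / cdot p w in
  let x' := x + a *: p in
  let r' := r - a *: w in
  let g' := cdot r' r' in
  let p' := r' + (g' / g) *: p in
  (x', r', p', g').

Definition cg_init (n : nat) (K : 'M[C]_n) (x0 : 'cV[C]_n) : cgstate n :=
  let r0 := - (K *m x0) in (x0, r0, r0, cdot r0 r0).

Definition cg (n : nat) (K : 'M[C]_n) (x0 : 'cV[C]_n) (i : nat) : cgstate n :=
  iter i (cg_step K) (cg_init K x0).

Definition cg_x n (K : 'M[C]_n) x0 i : 'cV[C]_n := (cg K x0 i).1.1.1.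
Definition cg_p n (K : 'M[C]_n) x0 i : 'cV[C]_n := (cg K x0 i).1.2.
Definition cg_g n (K : 'M[C]_n) x0 i : C := (cg K x0 i).2.

Definition cg_defined n (K : 'M[C]_n) x0 (k : nat) : Prop :=
  forall i, (i < k)%N ->
    cdot (cg_p K x0 i) (K *m cg_p K x0 i) != 0 /\
    ((i.+1 < k)%N -> cg_g K x0 i != 0).

End Defs.

(* Main.v *)
Require Import Defs.
From HB Require Import structures.
From mathcomp Require Import all_boot all_order all_algebra.
From mathcomp Require Import reals.
From mathcomp Require Import complex.
Import Order.TTheory GRing.Theory Num.Theory.
Local Open Scope ring_scope.
Set Implicit Arguments. Unset Strict Implicit.

Section Helpers.
Variable R : realType.
Local Notation C := R[i].

Lemma ctmxE m n (A : 'M[C]_(m, n)) i j : ctmx A i j = (A j i)^*.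
Proof. by rewrite /ctmx !mxE. Qed.

Lemma ctmxK m n (A : 'M[C]_(m, n)) : ctmx (ctmx A) = A.
Proof. by apply/matrixP => i j; rewrite !ctmxE conjCK. Qed.

Lemma ctmxM m n p (A : 'M[C]_(m, n)) (B : 'M[C]_(n, p)) :
  ctmx (A *m B) = ctmx B *m ctmx A.
Proof. by rewrite /ctmx map_mxM trmx_mul. Qed.

Lemma ctmxD m n (A B : 'M[C]_(m, n)) : ctmx (A + B) = ctmx A + ctmx B.
Proof. by apply/matrixP => i j; rewrite !ctmxE !mxE rmorphD. Qed.

Lemma ctmxN m n (A : 'M[C]_(m, n)) : ctmx (- A) = - ctmx A.
Proof. by apply/matrixP => i j; rewrite !ctmxE !mxE rmorphN. Qed.

Lemma ctmxB m n (A B : 'M[C]_(m, n)) : ctmx (A - B) = ctmx A - ctmx B.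
Proof. by rewrite ctmxD ctmxN. Qed.

Lemma ctmxZ m n a (A : 'M[C]_(m, n)) : ctmx (a *: A) = a^* *: ctmx A.
Proof. by apply/matrixP => i j; rewrite !ctmxE !mxE rmorphM. Qed.

Lemma ctmx1 n : ctmx (1%:M : 'M[C]_n) = 1%:M.
Proof. apply/matrixP => i j; rewrite !ctmxE !mxE eq_sym; exact: conjC_nat. Qed.

Lemma cdot_conj n (u v : 'cV[C]_n) : (cdot u v)^* = cdot v u.
Proof. by rewrite /cdot -ctmxE ctmxM ctmxK. Qed.

Lemma cdotZr n a (u v : 'cV[C]_n) : cdot u (a *: v) = a * cdot u v.
Proof. by rewrite /cdot -scalemxAr mxE. Qed.


Definition simF n m (V : 'M[C]_(n, m)) (S Si : 'M[C]_n) (s : cgstate R n) : cgstate R m :=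
  let: (x, r, p, g) := s in
  (ctmx V *m Si *m x, ctmx V *m S *m r, ctmx V *m Si *m p, g).

Definition simInv n m (V : 'M[C]_(n, m)) (S Si : 'M[C]_n) (s : cgstate R n) : Prop :=
  let: (x, r, p, g) := s in
  V *m ctmx V *m (S *m r) = S *m r /\ V *m ctmx V *m (Si *m p) = Si *m p.

Section Sim.
Variables (n m : nat) (K T S Si : 'M[C]_n) (V : 'M[C]_(n, m)).
Hypotheses (HK : ctmx K = K) (HS : ctmx S = S) (HT : S *m S = T)
  (HSiS : Si *m S = 1%:M) (HSSi : S *m Si = 1%:M) (HV : ctmx V *m V = 1%:M)
  (HPB : V *m ctmx V *m (S *m K *m S) = S *m K *m S)
  (HBP : (S *m K *m S) *m (V *m ctmx V) = S *m K *m S).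

Let Bt := ctmx V *m (S *m K *m S) *m V.

Lemma HSi : ctmx Si = Si.
Proof.
have : ctmx Si *m ctmx S = 1%:M by rewrite -ctmxM HSSi ctmx1.
rewrite HS => H.
by rewrite -[ctmx Si]mulmx1 -HSSi mulmxA H mul1mx.
Qed.

Lemma sim_step s : simInv V S Si s ->
  simInv V S Si (pcg_step K T s) /\ cg_step Bt (simF V S Si s) = simF V S Si (pcg_step K T s).
Proof.
case: s => [[[x r] p] g] /= [Hr Hp].
set P := V *m ctmx V.
set pt := ctmx V *m Si *m p.
have HVp : V *m pt = Si *m p by rewrite /pt -mulmxA mulmxA; exact: Hp.
have HSKp : S *m (K *m p) = (S *m K *m S) *m (Si *m p).
  by rewrite !mulmxA -(mulmxA _ S Si) HSSi mulmx1.
have HPSKp : P *m (S *m (K *m p)) = S *m (K *m p).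
  by rewrite HSKp mulmxA HPB.
have HBt : Bt *m pt = ctmx V *m S *m (K *m p).
  by rewrite /Bt -mulmxA HVp -mulmxA -HSKp mulmxA.
have Hden : cdot pt (Bt *m pt) = cdot (K *m p) p.
  rewrite /cdot HBt ctmxM HK !mulmxA -ctmxM HVp ctmxM HSi -(mulmxA _ Si S) HSiS mulmx1.
  by rewrite -!mulmxA.
rewrite Hden.
set d := g / cdot (K *m p) p.
set r' := r - d *: (K *m p).
have HSr' : S *m r' = S *m r - d *: (S *m (K *m p)).
  by rewrite /r' mulmxBr -scalemxAr.
have HPr' : P *m (S *m r') = S *m r'.
  by rewrite HSr' mulmxBr -scalemxAr HPSKp Hr.
have Hrt : ctmx V *m S *m r - d *: (Bt *m pt) = ctmx V *m S *m r'.
  by rewrite HBt /r' mulmxBr -scalemxAr.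
rewrite Hrt.
have Hg : cdot (ctmx V *m S *m r') (ctmx V *m S *m r') = cdot (T *m r') r'.
  rewrite /cdot -!mulmxA ctmxM ctmxK.
  rewrite -mulmxA (mulmxA V) -/P HPr'.
  by rewrite ctmxM HS ctmxM -HT ctmxM HS -!mulmxA.
rewrite Hg.
set g' := cdot (T *m r') r'.
have HSiTr : Si *m (T *m r') = S *m r'.
  by rewrite -HT -!mulmxA (mulmxA Si) HSiS mul1mx.
split; last first.
  congr (_, _, _, _).
  - by rewrite mulmxDr -scalemxAr.
   by rewrite mulmxDr -scalemxAr -!mulmxA HSiTr /pt !mulmxA.
split => //.
by rewrite mulmxDr -scalemxAr HSiTr mulmxDr -scalemxAr HPr' Hp.
Qed.

Let P := V *m ctmx V.

Lemma HSiT (r : 'cV[C]_n) : Si *m (T *m r) = S *m r.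
Proof. by rewrite -HT -!mulmxA (mulmxA Si) HSiS mul1mx. Qed.

Lemma Hg_gen (r : 'cV[C]_n) : P *m (S *m r) = S *m r ->
  cdot (ctmx V *m S *m r) (ctmx V *m S *m r) = cdot (T *m r) r.
Proof.
move=> HPr.
rewrite /cdot -!mulmxA ctmxM ctmxK.
rewrite -mulmxA (mulmxA V) -/P HPr.
by rewrite ctmxM HS ctmxM -HT ctmxM HS -!mulmxA.
Qed.

Lemma Hden_gen (p : 'cV[C]_n) : P *m (Si *m p) = Si *m p ->
  cdot (ctmx V *m Si *m p) (Bt *m (ctmx V *m Si *m p)) = cdot (K *m p) p.
Proof.
move=> Hp.
set pt := ctmx V *m Si *m p.
have HVp : V *m pt = Si *m p by rewrite /pt -mulmxA mulmxA; exact: Hp.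
have HSKp : S *m (K *m p) = (S *m K *m S) *m (Si *m p).
  by rewrite !mulmxA -(mulmxA _ S Si) HSSi mulmx1.
have HBt : Bt *m pt = ctmx V *m S *m (K *m p).
  by rewrite /Bt -mulmxA HVp -mulmxA -HSKp mulmxA.
rewrite /cdot HBt ctmxM HK !mulmxA -ctmxM HVp ctmxM HSi -(mulmxA _ Si S) HSiS mulmx1.
by rewrite -!mulmxA.
Qed.

Lemma sim_all (x0 : 'cV[C]_n) i : simInv V S Si (pcg K T x0 i) /\ cg Bt (ctmx V *m Si *m x0) i = simF V S Si (pcg K T x0 i).
Proof.
elim: i => [|i [IHinv IHeq]]; last first.
  rewrite /pcg /cg !iterS -/(pcg K T x0 i) -/(cg Bt _ i) IHeq.
  exact: sim_step.
rewrite /pcg /cg /= /pcg_init /cg_init /=.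
have HSr0 : S *m (- (K *m x0)) = - ((S *m K *m S) *m (Si *m x0)).
  by rewrite mulmxN !mulmxA -(mulmxA _ S Si) HSSi mulmx1.
have HPr : P *m (S *m (- (K *m x0))) = S *m (- (K *m x0)).
  by rewrite HSr0 mulmxN /P (mulmxA (V *m ctmx V)) HPB.
have HBx : - (Bt *m (ctmx V *m Si *m x0)) = ctmx V *m S *m (- (K *m x0)).
  have E : (S *m K *m S) *m (V *m (ctmx V *m Si *m x0)) = (S *m K *m S) *m (Si *m x0).
    by rewrite -(mulmxA (ctmx V) Si x0) (mulmxA V (ctmx V)) mulmxA HBP.
  by rewrite /Bt -mulmxA -mulmxA E -mulmxN -HSr0 mulmxA.
rewrite HBx Hg_gen // HSiT; split => //.
by rewrite -(mulmxA (ctmx V) Si (T *m _)) HSiT mulmxA.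
Qed.

End Sim.

Lemma ctmx0 m n : ctmx (0 : 'M[C]_(m, n)) = 0.
Proof. by apply/matrixP => i j; rewrite ctmxE !mxE rmorph0. Qed.

Lemma cdot0l n (v : 'cV[C]_n) : cdot 0 v = 0.
Proof. by rewrite /cdot ctmx0 mul0mx mxE. Qed.

Lemma cdot_herm n (H : 'M[C]_n) y : ctmx H = H -> (cdot y (H *m y))^* = cdot y (H *m y).
Proof. by move=> HH; rewrite cdot_conj /cdot ctmxM HH -mulmxA. Qed.

Lemma hpd_unit n (S : 'M[C]_n) : hpd S -> S \in unitmx.
Proof.
case=> HS Hpos; rewrite unitmxE unitfE; apply/negP => /det0P [v nz vS0].
have nzx : ctmx v != 0.
  by apply: contraNneq nz => H; rewrite -[v]ctmxK H ctmx0.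
have := Hpos _ nzx.
by rewrite -{1}HS -ctmxM vS0 ctmx0 /cdot mulmx0 mxE ltxx.
Qed.

End Helpers.

Unset Implicit Arguments. Set Strict Implicit.

Theorem lemma2p1 (R : realType) (n : nat) (A M T S : 'M[R[i]]_n) (l1 : R[i])
  (x0 : 'cV[R[i]]_n) (m : nat) (V : 'M[R[i]]_(n, m)) :
  herm_mx A -> hpd M ->
  (* l1 is an eigenvalue of (A, M), it is the smallest one and it is simple *)
  root (pencil_poly A M) l1 ->
  (forall mu : R[i], root (pencil_poly A M) mu -> l1 <= mu) ->
  mup l1 (pencil_poly A M) = 1%N ->
  hpd T ->
  (* S = T^{1/2}: the Hermitian positive definite square root of T *)
  hpd S -> S *m S = T ->
  (* x0 is not an eigenvector associated with l1 *)
  ~ (x0 != 0 /\ (A - l1 *: M) *m x0 = 0) ->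
  (* x0 is not M-orthogonal to the eigenspace associated with l1 *)
  (exists y : 'cV[R[i]]_n, (A - l1 *: M) *m y = 0 /\ cdot y (M *m x0) != 0) ->
  (* columns of V form an orthonormal basis of im(B), B = S (A - l1 M) S *)
  ctmx V *m V = 1%:M ->
  (V^T == (S *m (A - l1 *: M) *m S)^T)%MS ->
  forall k : nat, pcg_defined (A - l1 *: M) T x0 k ->
    let Bt := ctmx V *m (S *m (A - l1 *: M) *m S) *m V in
    let xt0 := ctmx V *m invmx S *m x0 in
    cg_defined Bt xt0 k /\
    forall i, (i <= k)%N ->
      ctmx V *m invmx S *m pcg_x (A - l1 *: M) T x0 i = cg_x Bt xt0 i.
Proof.
move=> HA HM _ _ _ HTpd HSpd HST _ [y [Ky Hy]] HV HVB k Hdef Bt xt0.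
have HS : ctmx S = S := HSpd.1.
have Hl1 : l1^* = l1.
  have ynz : y != 0 by apply: contraNneq Hy => ->; rewrite cdot0l.
  have HMy : 0 < cdot y (M *m y) := HM.2 _ ynz.
  have Ay : A *m y = l1 *: (M *m y).
    by apply/eqP; rewrite -subr_eq0 scalemxAl -mulmxBl Ky.
  have HMc := cdot_herm y HM.1.
  have := cdot_herm y HA; rewrite Ay cdotZr => E.
  have E2 : l1^* * (cdot y (M *m y))^* = l1 * cdot y (M *m y) by rewrite -E; exact: (esym (rmorphM _ _ _)).
  rewrite HMc in E2.
  exact: (mulIf (lt0r_neq0 HMy)).
set K := A - l1 *: M.
have HK : ctmx K = K by rewrite /K ctmxB ctmxZ HA HM.1 Hl1.
have Su := hpd_unit HSpd.
have HSiS : invmx S *m S = 1%:M := mulVmx Su.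
have HSSi : S *m invmx S = 1%:M := mulmxV Su.
have HPB : V *m ctmx V *m (S *m K *m S) = S *m K *m S.
  move: HVB => /andP [_ /submxP [D HD]].
  have -> : S *m K *m S = V *m D^T by rewrite -[S *m K *m S]trmxK HD trmx_mul trmxK.
  by rewrite -mulmxA (mulmxA (ctmx V)) HV mul1mx.
have HBh : ctmx (S *m K *m S) = S *m K *m S by rewrite !ctmxM HS HK mulmxA.
have HP : ctmx (V *m ctmx V) = V *m ctmx V by rewrite ctmxM ctmxK.
have HBP : (S *m K *m S) *m (V *m ctmx V) = S *m K *m S.
  by rewrite -{1}HBh -{1}HP -ctmxM HPB HBh.
have Hall : forall i, simInv V S (invmx S) (pcg K T x0 i) /\ cg Bt xt0 i = simF V S (invmx S) (pcg K T x0 i).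
  by move=> i; apply: sim_all.
have Hden : forall p : 'cV[R[i]]_n, V *m ctmx V *m (invmx S *m p) = invmx S *m p ->
  cdot (ctmx V *m invmx S *m p) (Bt *m (ctmx V *m invmx S *m p)) = cdot (K *m p) p.
  by move=> p Hp; apply: Hden_gen.
split.
  move=> i ik; have [Hinv Heq] := Hall i; have [h1 h2] := Hdef i ik.
  move: h1 h2; rewrite /pcg_p /pcg_g /cg_p /cg_g Heq.
  case: (pcg K T x0 i) Hinv => [[[x r] p] g] /= [_ Hp] h1 h2.
  by rewrite Hden.
move=> i _; have [_ Heq] := Hall i.
rewrite /cg_x Heq /pcg_x; by case: (pcg K T x0 i) => [[[x r] p] g].
Qed.
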